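(* $\Delta_{\mathsf F}$ is a pseudometric on the set $\{b\in B(\mathcal V),\ \mathcal V\in \mathsf F\}$.
   Context: Let $\mathsf{BS}$ be the category whose objects are finite dimensional real vector spaces $\mathcal V$ endowed with a fixed proper (closed, convex, pointed, generating) cone $\mathcal V^+\subset\mathcal V$ and a base section $B(\mathcal V)$, i.e. a convex subset $B(\mathcal V)\subset\mathcal V^+$ which is a base of the cone $\mathcal V^+\cap\mathrm{span}(B(\mathcal V))$ and satisfies $B(\mathcal V)\cap\mathrm{int}(\mathcal V^+)\neq\emptyset$. Morphisms $\Lambda:\mathcal V\to\mathcal W$ in $\mathsf{BS}$ are linear maps with $\Lambda(\mathcal V^+)\subseteq\mathcal W^+$ and $\Lambda(B(\mathcal V))\subseteq B(\mathcal W)$. The dual object $\mathcal V^*$ carries the dual cone $\mathcal V^{*+}=\{\varphi\in\mathcal V^*:\ \langle\varphi,c\rangle\ge0\ \forall c\in\mathcal V^+\}$ and the dual base section $B(\mathcal V^* )=\{\varphi\in\mathcal V^{*+}:\ \langle\varphi,b\rangle=1\ \forall b\in B(\mathcal V)\}$. With $[-B(\mathcal V^* ),B(\mathcal V^* )]=\{x\in\mathcal V^*:\ \exists b\in B(\mathcal V^* ),\ -b\le x\le b\}$, the norm on $\mathcal V$ is $\|x\|_{\mathcal V}=\max_{\psi\in[-B(\mathcal V^* ),B(\mathcal V^* )]}\langle\psi,x\rangle$. Let $\mathsf F$ be a subcategory of $\mathsf{BS}$ such that for any objects $\mathcal V,\mathcal W\in\mathsf F$ the set $\mathsf F(\mathcal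 V,\mathcal W)$ of morphisms $\mathcal V\to\mathcal W$ in $\mathsf F$ is convex. For objects $\mathcal V_1,\mathcal V_2\in\mathsf F$ and $b_1\in B(\mathcal V_1)$, $b_2\in B(\mathcal V_2)$, define $\delta_{\mathsf F}(b_1\|b_2)=\inf_{\Lambda\in\mathsf F(\mathcal V_1,\mathcal V_2)}\|\Lambda(b_1)-b_2\|_{\mathcal V_2}$ and $\Delta_{\mathsf F}(b_1,b_2)=\max\{\delta_{\mathsf F}(b_1\|b_2),\delta_{\mathsf F}(b_2\|b_1)\}$. *)

(* Defs.v *)
From HB Require Import structures.
From mathcomp Require Import all_boot all_order all_algebra.
From mathcomp Require Import all_classical all_reals all_analysis.
Set Implicit Arguments.
Unset Strict Implicit.
Unset Printing Implicit Defensive.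
Import Order.TTheory GRing.Theory Num.Theory.
Import numFieldNormedType.Exports.
Local Open Scope classical_set_scope.
Local Open Scope ring_scope.

Section BaseSections.
Variable R : realType.

(* A finite dimensional real vector space is modelled as R^n = 'rV[R]_n;
   its dual is again 'rV[R]_n with the pairing below. *)
Definition pairing n (phi x : 'rV[R]_n) : R := \sum_(i < n) phi 0 i * x 0 i.

Definition proper_cone n (C : set 'rV[R]_n) : Prop :=
  [/\ [/\ C 0,
        (forall x (a : R), C x -> 0 <= a -> C (a *: x)),
        (forall x y, C x -> C y -> C (x + y))
      & (forall x y (t : R), C x -> C y -> 0 <= t <= 1 -> C (t *: x + (1 - t) *: y))],
      closed C,
      (forall x, C x -> C (- x) -> x = 0)
    & (forall z, exists x y, [/\ C x, C y & z = x - y])].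

Definition span_of n (B : set 'rV[R]_n) : set 'rV[R]_n :=
  [set x | exists (k : nat) (c : 'I_k -> R) (v : 'I_k -> 'rV[R]_n),
           (forall i, B (v i)) /\ x = \sum_(i < k) c i *: v i].

Definition cone_base n (K B : set 'rV[R]_n) : Prop :=
  [/\ B `<=` K, ~ B 0,
      (forall x y (t : R), B x -> B y -> 0 <= t <= 1 -> B (t *: x + (1 - t) *: y))
    & (forall x, K x -> x != 0 ->
         exists t b, [/\ 0 < t, B b, x = t *: b &
           forall t' b', 0 < t' -> B b' -> x = t' *: b' -> t' = t /\ b' = b])].

Definition base_section n (C B : set 'rV[R]_n) : Prop :=
  [/\ B `<=` C, cone_base (C `&` span_of B) B & (B `&` interior C) !=set0].

Record BSObj := mkBSObj {
  bsdim : nat;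
  pos : set 'rV[R]_bsdim;
  base : set 'rV[R]_bsdim;
  pos_proper : proper_cone pos;
  base_sec : base_section pos base }.
Arguments pos : clear implicits.
Arguments base : clear implicits.

(* morphisms act on row vectors by right multiplication: x |-> x *m A *)
Definition BSmor (V W : BSObj) (A : 'M[R]_(bsdim V, bsdim W)) : Prop :=
  (forall x, pos V x -> pos W (x *m A)) /\ (forall b, base V b -> base W (b *m A)).

Definition dual_cone (V : BSObj) : set 'rV[R]_(bsdim V) :=
  [set phi | forall c, pos V c -> 0 <= pairing phi c].
Arguments dual_cone : clear implicits.

Definition dual_base (V : BSObj) : set 'rV[R]_(bsdim V) :=
  [set phi | dual_cone V phi /\ forall b, base V b -> pairing phi b = 1].
Arguments dual_base : clear implicits.

(* the order interval [-B(V dual), B(V dual)] for the dual cone order *)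
Definition dual_interval (V : BSObj) : set 'rV[R]_(bsdim V) :=
  [set x | exists b, [/\ dual_base V b, dual_cone V (x + b) & dual_cone V (b - x)]].
Arguments dual_interval : clear implicits.

(* the base norm (the max of the paper, taken as a supremum in \bar R) *)
Definition bnorm (V : BSObj) (x : 'rV[R]_(bsdim V)) : \bar R :=
  ereal_sup [set (pairing psi x)%:E | psi in dual_interval V].
Arguments bnorm : clear implicits.

Definition is_subcat (Fob : BSObj -> Prop)
    (Fmor : forall V W : BSObj, 'M[R]_(bsdim V, bsdim W) -> Prop) : Prop :=
  [/\ (forall V W A, Fmor V W A -> [/\ Fob V, Fob W & BSmor A]),
      (forall V, Fob V -> Fmor V V 1%:M)
    & (forall U V W (A : 'M[R]_(bsdim U, bsdim V)) (B : 'M[R]_(bsdim V, bsdim W)),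
         Fmor U V A -> Fmor V W B -> Fmor U W (A *m B))].

Definition convex_homs (Fob : BSObj -> Prop)
    (Fmor : forall V W : BSObj, 'M[R]_(bsdim V, bsdim W) -> Prop) : Prop :=
  forall V W, Fob V -> Fob W -> forall (A B : 'M[R]_(bsdim V, bsdim W)) (t : R),
    Fmor V W A -> Fmor V W B -> 0 <= t <= 1 -> Fmor V W (t *: A + (1 - t) *: B).

Definition deltaF (Fmor : forall V W : BSObj, 'M[R]_(bsdim V, bsdim W) -> Prop)
    (V1 V2 : BSObj) (b1 : 'rV[R]_(bsdim V1)) (b2 : 'rV[R]_(bsdim V2)) : \bar R :=
  ereal_inf [set bnorm V2 (b1 *m A - b2) | A in Fmor V1 V2].

Definition DeltaF (Fmor : forall V W : BSObj, 'M[R]_(bsdim V, bsdim W) -> Prop)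
    (V1 V2 : BSObj) (b1 : 'rV[R]_(bsdim V1)) (b2 : 'rV[R]_(bsdim V2)) : \bar R :=
  Order.max (deltaF Fmor b1 b2) (deltaF Fmor b2 b1).

End BaseSections.
Arguments pos {R} b _.
Arguments base {R} b _.
Arguments deltaF {R} Fmor {V1 V2} b1 b2.
Arguments DeltaF {R} Fmor {V1 V2} b1 b2.

(* Main.v *)
Require Import Defs.
From HB Require Import structures.
From mathcomp Require Import all_boot all_order all_algebra.
From mathcomp Require Import all_classical all_reals all_analysis.
Import Order.TTheory GRing.Theory Num.Theory.
Import numFieldNormedType.Exports.
Local Open Scope classical_set_scope.
Local Open Scope ring_scope.
From mathcomp Require Import ring lra.

Lemma xgetPex {T : choiceType} x0 (P : set T) : (exists x, P x) -> P (xget x0 P).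
Proof. by move=> [x Px]; case: xgetP => // /(_ x Px). Qed.

Section Ext.
Variables (R : realType) (n : nat) (C : set 'rV[R]_n).
Hypothesis Cadd : forall x y, C x -> C y -> C (x + y).
Hypothesis Cscale : forall x (a : R), C x -> 0 <= a -> C (a *: x).
Variable e : 'rV[R]_n.
Hypothesis Cdir : forall v, exists s : R, 0 < s /\ C (s *: e + v).

Definition subsp (S : set 'rV[R]_n) := S 0 /\ forall a x y, S x -> S y -> S (a *: x + y).
Definition linon (S : set 'rV[R]_n) (f : 'rV[R]_n -> R) :=
  forall a x y, S x -> S y -> f (a *: x + y) = a * f x + f y.
Definition posC (S : set 'rV[R]_n) (f : 'rV[R]_n -> R) :=
  forall x, S x -> C x -> 0 <= f x.

Lemma linon0 {S f} : subsp S -> linon S f -> f 0 = 0.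
Proof.
move=> [S0 _] lf; have := lf 1 0 0 S0 S0.
rewrite scale1r addr0 mul1r => /(congr1 (fun z => z - f 0)); by rewrite subrr addrK => /esym.
Qed.

Lemma linonZ {S f} a x : subsp S -> linon S f -> S x -> f (a *: x) = a * f x.
Proof.
move=> sS lf Sx; have := lf a x 0 Sx sS.1.
by rewrite addr0 (linon0 sS lf) addr0.
Qed.

Lemma linonD {S f x y} : subsp S -> linon S f -> S x -> S y -> f (x + y) = f x + f y.
Proof. by move=> sS lf Sx Sy; have := lf 1 x y Sx Sy; rewrite scale1r mul1r. Qed.

Lemma subspZ {S} a x : subsp S -> S x -> S (a *: x).
Proof. by move=> [S0 Sl] Sx; have := Sl a x 0 Sx S0; rewrite addr0. Qed.

Lemma subspD {S x y} : subsp S -> S x -> S y -> S (x + y).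
Proof. by move=> [S0 Sl] Sx Sy; have := Sl 1 x y Sx Sy; rewrite scale1r. Qed.

Lemma step S f v : S e -> subsp S -> linon S f -> posC S f ->
  exists S' f', [/\ subsp S', linon S' f', posC S' f',
    (forall x, S x -> S' x /\ f' x = f x) & S' v].
Proof.
move=> Se sS lf pf.
case: (pselect (S v)) => Sv.
  by exists S, f; split.
pose S' := [set x | exists st : 'rV[R]_n * R, S st.1 /\ x = st.1 + st.2 *: v].
have uniq : forall s1 t1 s2 t2, S s1 -> S s2 -> s1 + t1 *: v = s2 + t2 *: v ->
    s1 = s2 /\ t1 = t2.
  move=> s1 t1 s2 t2 S1 S2 E.
  have Et : t1 = t2.
    apply/eqP; apply/negPn/negP => ne.
    have E2 : (t1 - t2) *: v = s2 - s1.
      rewrite scalerBl; apply/eqP; rewrite subr_eq.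
      by rewrite addrAC -E addrC addKr.
    apply: Sv.
    have -> : v = (t1 - t2)^-1 *: (s2 - s1).
      by rewrite -E2 scalerA mulVf ?scale1r // subr_eq0.
    apply: subspZ => //; rewrite addrC -scaleN1r; exact: sS.2.
  split => //; move: E; rewrite Et => /eqP; rewrite (addrC s1) (addrC s2) => /eqP.
  by move/addrI.
pose Aset := [set - f x | x in [set x | S x /\ C (x + v)]].
have bnd : forall x y, S x -> C (x + v) -> S y -> C (y - v) -> - f x <= f y.
  move=> x y Sx Cx Sy Cy.
  have : 0 <= f (x + y).
    apply: pf; first exact: subspD.
    by have := Cadd _ _ Cx Cy; rewrite addrACA subrr addr0.
  by rewrite (linonD sS lf Sx Sy) => h; rewrite -subr_ge0 opprK addrC.
have [s [s0 Cs]] := Cdir v.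
have [s' [s'0 Cs']] := Cdir (- v).
have hasA : has_sup Aset.
  split.
    exists (- f (s *: e)); exists (s *: e) => //; split; last by [].
    exact: subspZ.
  exists (f (s' *: e)) => z [x [Sx Cx] <-].
  by apply: bnd => //; exact: subspZ.
pose c := sup Aset.
have Hc1 : forall x, S x -> C (x + v) -> - f x <= c.
  by move=> x Sx Cx; apply: sup_upper_bound => //; exists x.
have Hc2 : forall y, S y -> C (y - v) -> c <= f y.
  move=> y Sy Cy; apply: ge_sup; first exact: hasA.1.
  by move=> z [x [Sx Cx] <-]; apply: bnd.
have Hc1' : forall x u, 0 < u -> S x -> C (x + u *: v) -> - f x <= u * c.
  move=> x u u0 Sx Cx.
  have h := Hc1 (u^-1 *: x) (subspZ _ _ sS Sx).
  have : - (u^-1 * f x) <= c.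
    rewrite -(linonZ _ _ sS lf Sx); apply: h.
    have -> : u^-1 *: x + v = u^-1 *: (x + u *: v).
      by rewrite scalerDr scalerA mulVf ?scale1r // gt_eqF.
    by apply: Cscale => //; rewrite invr_ge0 ltW.
  rewrite -(ler_pM2l u0).
  have -> : u * - (u^-1 * f x) = - f x by field; rewrite gt_eqF.
  done.
have Hc2' : forall y u, 0 < u -> S y -> C (y - u *: v) -> u * c <= f y.
  move=> y u u0 Sy Cy.
  have h := Hc2 (u^-1 *: y) (subspZ _ _ sS Sy).
  have : c <= u^-1 * f y.
    rewrite -(linonZ _ _ sS lf Sy); apply: h.
    have -> : u^-1 *: y - v = u^-1 *: (y - u *: v).
      by rewrite scalerBr scalerA mulVf ?scale1r // gt_eqF.
    by apply: Cscale => //; rewrite invr_ge0 ltW.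
  move=> h2.
  have <- : u * (u^-1 * f y) = f y by field; rewrite gt_eqF.
  by rewrite ler_pM2l.
pose P x := [set st : 'rV[R]_n * R | S st.1 /\ x = st.1 + st.2 *: v].
pose f' x := let st := xget (0, 0) (P x) in f st.1 + st.2 * c.
have f'E : forall s t, S s -> f' (s + t *: v) = f s + t * c.
  move=> s3 t Ss.
  have := @xgetPex _ (0, 0) (P (s3 + t *: v)) (ex_intro _ (s3, t) (conj Ss erefl)).
  rewrite /f' /=.
  case: (xget _ _) => s1 t1 /= [S1 E].
  by have [-> ->] := uniq _ _ _ _ Ss S1 E.
have decomp : forall a s1 t1 s2 t2,
    a *: (s1 + t1 *: v) + (s2 + t2 *: v) = (a *: s1 + s2) + (a * t1 + t2) *: v.
  by move=> a s1 t1 s2 t2; rewrite scalerDr scalerDl scalerA addrACA.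
exists S', f'; split.
- split; first by exists (0, 0); split; [exact: sS.1 | rewrite /= scale0r addr0].
  move=> a _ _ [[s1 t1] [/= S1 ->]] [[s2 t2] [/= S2 ->]].
  exists (a *: s1 + s2, a * t1 + t2); split; last exact: decomp.
  exact: sS.2.
- move=> a _ _ [[s1 t1] [/= S1 ->]] [[s2 t2] [/= S2 ->]].
  rewrite decomp !f'E //; last exact: sS.2.
  rewrite lf //; ring.
- move=> _ [[s1 t1] [/= S1 ->]] Cx.
  rewrite f'E //.
  case: (ltgtP t1 0) => ht.
  + have := Hc2' s1 (- t1); rewrite oppr_gt0 => /(_ ht S1).
    rewrite scaleNr opprK => /(_ Cx).
    by rewrite -subr_ge0 mulNr opprK addrC.
  + have := Hc1' s1 t1 ht S1 Cx.
    by rewrite -subr_ge0 opprK addrC.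
  + rewrite ht mul0r addr0; apply: pf => //.
    by move: Cx; rewrite ht scale0r addr0.
- move=> x Sx; split; first by exists (x, 0); split; [| rewrite /= scale0r addr0].
  by have := f'E x 0 Sx; rewrite scale0r addr0 mul0r addr0.
- by exists (0, 1); split; [exact: sS.1 | rewrite /= add0r scale1r].
Qed.

Lemma iter_ext (l : seq 'rV[R]_n) S f : S e -> subsp S -> linon S f -> posC S f ->
  exists S' f', [/\ S' e /\ subsp S', linon S' f', posC S' f',
    (forall x, S x -> S' x /\ f' x = f x) & forall v, v \in l -> S' v].
Proof.
move=> Se sS lf pf; elim: l => [|v l [S1 [f1 [[S1e sS1] lf1 pf1 ext1 Hl]]]].
  by exists S, f; split.
have [S2 [f2 [sS2 lf2 pf2 ext2 S2v]]] := step S1 f1 v S1e sS1 lf1 pf1.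
exists S2, f2; split => //.
- by split => //; have [] := ext2 e S1e.
- move=> x Sx; have [S1x <-] := ext1 x Sx; exact: ext2.
- move=> w; rewrite inE => /orP [/eqP -> // | wl].
  by have [] := ext2 w (Hl w wl).
Qed.

Lemma lin_sum S f (x : 'rV[R]_n) (r : seq 'I_n) : subsp S -> linon S f ->
  (forall j, S 'e_j) ->
  S (\sum_(j <- r) x 0 j *: 'e_j) /\
  f (\sum_(j <- r) x 0 j *: 'e_j) = \sum_(j <- r) x 0 j * f 'e_j.
Proof.
move=> sS lf Se; elim: r => [|j r [IH1 IH2]].
  by rewrite !big_nil; split; [exact: sS.1 | exact: linon0 sS lf].
rewrite !big_cons; split; first exact: sS.2.
by rewrite lf // IH2.
Qed.

Lemma ext_phi S f : S e -> subsp S -> linon S f -> posC S f ->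
  exists phi : 'rV[R]_n, (forall x, C x -> 0 <= pairing phi x) /\
     forall x, S x -> pairing phi x = f x.
Proof.
move=> Se sS lf pf.
have [S' [f' [[_ sS'] lf' pf' ext Hl]]] :=
  iter_ext [seq 'e_j | j <- enum 'I_n] S f Se sS lf pf.
have Sall : forall j, S' 'e_j.
  by move=> j; apply: Hl; apply/mapP; exists j => //; rewrite mem_enum.
have key : forall x, S' x /\ pairing (\row_j f' 'e_j) x = f' x.
  move=> x; have [H1 H2] := lin_sum S' f' x (index_enum 'I_n) sS' lf' Sall.
  rewrite -row_sum_delta in H1 H2; split => //.
  rewrite H2 /pairing; apply: eq_bigr => j _; by rewrite mxE mulrC.
exists (\row_j f' 'e_j); split.
  by move=> x Cx; have [Sx ->] := key x; exact: pf'.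
by move=> x Sx; have [_ ->] := key x; have [_ ->] := ext x Sx.
Qed.
End Ext.

Lemma int_dir (R : realType) n (C : set 'rV[R]_n) (e v : 'rV[R]_n) :
  nbhs e C -> exists t : R, 0 < t /\ C (e + t *: v).
Proof.
move=> He.
have H : (fun t : R => e + t *: v) @ (0:R) --> e.
  rewrite -[X in _ --> X]addr0.
  apply: cvgD; first exact: cvg_cst.
  rewrite -[X in _ --> X](scale0r v).
  apply: cvgZl. exact: cvg_id.
have := H _ He.
move=> /nbhs_ballP [eps /= eps0 Heps].
exists (eps / 2); split; first by rewrite divr_gt0.
apply: Heps.
rewrite /ball /= sub0r normrN gtr0_norm ?divr_gt0 //.
by rewrite ltr_pdivrMr // ltr_pMr // ltr1n.
Qed.

Section BS.
Variables (R : realType) (V : BSObj R).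
Local Notation n := (bsdim V).
Local Notation C := (pos V).
Local Notation B := (base V).

Lemma Bfacts : [/\ B `<=` C, ~ B 0,
      (forall x y (t : R), B x -> B y -> 0 <= t <= 1 -> B (t *: x + (1 - t) *: y)),
      (forall x, (C `&` span_of B) x -> x != 0 ->
         exists t b, [/\ 0 < t, B b, x = t *: b &
           forall t' b', 0 < t' -> B b' -> x = t' *: b' -> t' = t /\ b' = b])
    & exists e, B e /\ nbhs e C].
Proof.
have [BC [_ nB0 Bc Bu] [e [Be Ce]]] := base_sec V.
by split => //; exists e.
Qed.

Lemma Bnz {b} : B b -> b != 0.
Proof. by move=> Bb; apply/eqP => h; have [_ nB0 _ _ _] := Bfacts; apply: nB0; rewrite -h. Qed.

Lemma L1 p q b b' : 0 <= p -> 0 <= q -> B b -> B b' -> p *: b = q *: b' -> p = q.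
Proof.
move=> p0 q0 Bb Bb' E.
case: (eqVneq p 0) => [pz|pnz].
  move: E; rewrite pz scale0r => /esym/eqP; rewrite scaler_eq0 (negbTE (Bnz Bb')) orbF.
  by move/eqP ->.
case: (eqVneq q 0) => [qz|qnz].
  move: E; rewrite qz scale0r => /eqP; rewrite scaler_eq0 (negbTE (Bnz Bb)) orbF.
  by rewrite (negbTE pnz).
have [BC _ _ Bu _] := Bfacts.
have Kx : (C `&` span_of B) (p *: b).
  have [[_ Csc _ _] _ _ _] := pos_proper V.
  split; first by apply: Csc => //; exact: BC.
  by exists 1%N, (fun _ => p), (fun _ => b); split => //; rewrite big_ord1.
have xnz : p *: b != 0 by rewrite scaler_eq0 negb_or pnz Bnz.
have [t [b0 [_ _ _ U]]] := Bu _ Kx xnz.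
have pp : 0 < p by rewrite lt_def pnz.
have qp : 0 < q by rewrite lt_def qnz.
by rewrite (U p b pp Bb erefl).1 (U q b' qp Bb' E).1.
Qed.

Lemma L2 p q b1 b2 : 0 <= p -> 0 <= q -> B b1 -> B b2 ->
  exists b, B b /\ p *: b1 + q *: b2 = (p + q) *: b.
Proof.
move=> p0 q0 B1 B2.
case: (eqVneq (p + q) 0) => [pq|pqnz].
  have pz : p = 0 by lra.
  have qz : q = 0 by lra.
  by exists b1; split => //; rewrite pz qz addr0 !scale0r addr0.
have pqp : 0 < p + q by rewrite lt_def pqnz addr_ge0.
have [_ _ Bc _ _] := Bfacts.
exists ((p / (p + q)) *: b1 + (1 - p / (p + q)) *: b2); split.
  apply: Bc => //; apply/andP; split; first by rewrite divr_ge0 // ltW.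
  by rewrite ler_pdivrMr // mul1r lerDl.
rewrite scalerDr !scalerA; congr (_ *: _ + _ *: _); field; exact: pqnz.
Qed.

Lemma L3 p1 p2 q1 q2 b1 b2 c1 c2 : 0 <= p1 -> 0 <= p2 -> 0 <= q1 -> 0 <= q2 ->
  B b1 -> B b2 -> B c1 -> B c2 ->
  p1 *: b1 + p2 *: b2 = q1 *: c1 + q2 *: c2 -> p1 + p2 = q1 + q2.
Proof.
move=> ? ? ? ? ? ? ? ?.
have [d [Bd ->]] := L2 p1 p2 b1 b2 ltac:(done) ltac:(done) ltac:(done) ltac:(done).
have [d' [Bd' ->]] := L2 q1 q2 c1 c2 ltac:(done) ltac:(done) ltac:(done) ltac:(done).
by apply: L1 => //; apply: addr_ge0.
Qed.

Definition Rep (x : 'rV[R]_n) t1 t2 b1 b2 :=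
  [/\ 0 <= t1, 0 <= t2, B b1, B b2 & x = t1 *: b1 - t2 *: b2].
Definition S0 x := exists t1 t2 b1 b2, Rep x t1 t2 b1 b2.
Definition f0 x :=
  let q := xget (0, 0, 0, 0) [set q : R * R * 'rV[R]_n * 'rV[R]_n |
                  Rep x q.1.1.1 q.1.1.2 q.1.2 q.2] in q.1.1.1 - q.1.1.2.

Lemma f0E {x t1 t2 b1 b2} : Rep x t1 t2 b1 b2 -> f0 x = t1 - t2.
Proof.
move=> Hr.
have := @xgetPex _ (0, 0, 0, 0) [set q : R * R * 'rV[R]_n * 'rV[R]_n |
                  Rep x q.1.1.1 q.1.1.2 q.1.2 q.2]
  (ex_intro _ (t1, t2, b1, b2) Hr).
rewrite /f0 /=; case: xget => [[[s1 s2] c1] c2] /= [s10 s20 C1 C2 E].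
case: Hr => t10 t20 B1 B2 E'.
have : t1 *: b1 + s2 *: c2 = s1 *: c1 + t2 *: b2.
  by rewrite -[t1 *: b1](subrK (t2 *: b2)) -E' E addrAC subrK.
move/L3 => /(_ t10 s20 s10 t20 B1 C2 C1 B2) h.
lra.
Qed.

Lemma repL a {x y t1 t2 b1 b2 s1 s2 c1 c2} :
  Rep x t1 t2 b1 b2 -> Rep y s1 s2 c1 c2 ->
  exists u1 u2 d1 d2, Rep (a *: x + y) u1 u2 d1 d2 /\
    u1 - u2 = a * (t1 - t2) + (s1 - s2).
Proof.
move=> [t10 t20 B1 B2 ->] [s10 s20 C1 C2 ->].
have [p1 [p2 [e1 [e2 [[p10 p20 E1 E2 Ex] Ed]]]]] : exists p1 p2 e1 e2,
   Rep (a *: (t1 *: b1 - t2 *: b2)) p1 p2 e1 e2 /\ p1 - p2 = a * (t1 - t2).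
  case: (lerP 0 a) => a0.
    exists (a * t1), (a * t2), b1, b2; split; last by ring.
    split; rewrite ?mulr_ge0 //.
    by rewrite scalerBr !scalerA.
  exists (- a * t2), (- a * t1), b2, b1; split; last by ring.
  split; rewrite ?mulr_ge0 // ?oppr_ge0 ?ltW //.
  by rewrite scalerBr !scalerA !mulNr !scaleNr opprK addrC.
rewrite Ex.
have [d1 [D1 Ed1]] := L2 _ _ _ _ p10 s10 E1 C1.
have [d2 [D2 Ed2]] := L2 _ _ _ _ p20 s20 E2 C2.
exists (p1 + s1), (p2 + s2), d1, d2; split; last by rewrite -Ed; ring.
split => //; try exact: addr_ge0.
by rewrite -Ed1 -Ed2 addrACA -opprD.
Qed.

Lemma S0sub : @subsp R n S0.
Proof.
split.
  have [_ _ _ _ [e [Be _]]] := Bfacts.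
  exists 0, 0, e, e; split => //; by rewrite scale0r subr0.
move=> a x y [t1 [t2 [b1 [b2 Hx]]]] [s1 [s2 [c1 [c2 Hy]]]].
have [u1 [u2 [d1 [d2 [H _]]]]] := repL a Hx Hy.
by exists u1, u2, d1, d2.
Qed.

Lemma f0lin : @linon R n S0 f0.
Proof.
move=> a x y [t1 [t2 [b1 [b2 Hx]]]] [s1 [s2 [c1 [c2 Hy]]]].
have [u1 [u2 [d1 [d2 [H Hu]]]]] := repL a Hx Hy.
by rewrite (f0E H) (f0E Hx) (f0E Hy).
Qed.

Lemma f0pos : @posC R n C S0 f0.
Proof.
move=> x [t1 [t2 [b1 [b2 Hx]]]] Cx.
rewrite (f0E Hx); case: Hx => t10 t20 B1 B2 Ex.
have [BC _ _ Bu _] := Bfacts.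
case: (eqVneq x 0) => [x0|xnz].
  have : t1 *: b1 = t2 *: b2 by apply/eqP; rewrite -subr_eq0 -Ex x0.
  by move/L1 => /(_ t10 t20 B1 B2) ->; rewrite subrr.
have Kx : (C `&` span_of B) x.
  split => //.
  exists 2%N, (fun i : 'I_2 => nth 0 [:: t1; - t2] i),
    (fun i : 'I_2 => nth 0 [:: b1; b2] i); split.
    by case=> [[|[|i]] Hi] //=.
  by rewrite !big_ord_recl big_ord0 /= addr0 scaleNr Ex.
have [s [b [s0 Bb Exs _]]] := Bu x Kx xnz.
have : s *: b + t2 *: b2 = t1 *: b1 + 0 *: b1.
  by rewrite -Exs Ex subrK scale0r addr0.
move/L3 => /(_ (ltW s0) t20 t10 (lexx 0) Bb B2 B1 B1) h.
lra.
Qed.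

Lemma dual_base_ne : exists phi, @dual_base R V phi.
Proof.
have [BC _ _ _ [e [Be Ce]]] := Bfacts.
have [[_ Csc Cad _] _ _ _] := pos_proper V.
have Cdir : forall v, exists s : R, 0 < s /\ C (s *: e + v).
  move=> v; have [t [t0 Ct]] := @int_dir R n C e v Ce.
  exists t^-1; split; first by rewrite invr_gt0.
  have -> : t^-1 *: e + v = t^-1 *: (e + t *: v).
    by rewrite scalerDr scalerA mulVf ?scale1r // gt_eqF.
  by apply: Csc => //; rewrite invr_ge0 ltW.
have RepB : forall b, B b -> Rep b 1 0 b b.
  by move=> b Bb; split => //; rewrite scale1r scale0r subr0.
have Se : S0 e by exists 1, 0, e, e; exact: RepB.
have [phi [Hpos Hval]] := @ext_phi R n C Cad Csc e Cdir S0 f0 Se S0sub f0lin f0pos.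
exists phi; split; first by move=> c Cc; exact: Hpos.
move=> b Bb; rewrite Hval; last by exists 1, 0, b, b; exact: RepB.
by rewrite (f0E (RepB b Bb)) subr0.
Qed.

End BS.

Section Norm.
Variable R : realType.

Lemma pairingE n (phi x : 'rV[R]_n) : pairing phi x = (x *m phi^T) 0 0.
Proof. by rewrite /pairing mxE; apply: eq_bigr => j _; rewrite mxE mulrC. Qed.

Lemma pairing_mul m n (psi : 'rV[R]_n) (x : 'rV[R]_m) (A : 'M[R]_(m, n)) :
  pairing psi (x *m A) = pairing (psi *m A^T) x.
Proof. by rewrite !pairingE trmx_mul trmxK mulmxA. Qed.

Lemma pairingDl n (a b x : 'rV[R]_n) : pairing (a + b) x = pairing a x + pairing b x.
Proof. by rewrite !pairingE linearD /= mulmxDr mxE. Qed.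

Lemma pairingDr n (a x y : 'rV[R]_n) : pairing a (x + y) = pairing a x + pairing a y.
Proof. by rewrite !pairingE mulmxDl mxE. Qed.

Lemma pairing0r n (a : 'rV[R]_n) : pairing a 0 = 0.
Proof. by rewrite pairingE mul0mx mxE. Qed.

Lemma dual_cone_mor (V W : BSObj R) (A : 'M[R]_(bsdim V, bsdim W)) psi :
  BSmor A -> @dual_cone R W psi -> @dual_cone R V (psi *m A^T).
Proof. by move=> [HA _] Hpsi c Cc; rewrite -pairing_mul; apply: Hpsi; exact: HA. Qed.

Lemma dual_int_mor (V W : BSObj R) (A : 'M[R]_(bsdim V, bsdim W)) psi :
  BSmor A -> @dual_interval R W psi -> @dual_interval R V (psi *m A^T).
Proof.
move=> HA [b [[Hb1 Hb2] H1 H2]]; exists (b *m A^T); split.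
- split; first exact: dual_cone_mor.
  by move=> b' Bb'; rewrite -pairing_mul; apply: Hb2; exact: HA.2.
- by rewrite -mulmxDl; exact: dual_cone_mor.
- by rewrite -mulmxBl; exact: dual_cone_mor.
Qed.

Lemma bnorm_ge0 (V : BSObj R) x : (0 <= @bnorm R V x)%E.
Proof.
have [phi Hphi] := dual_base_ne R V.
apply: ereal_sup_ubound; exists 0; last by rewrite /pairing big1 // => j _; rewrite mxE mul0r.
by exists phi; split => //; rewrite ?add0r ?subr0; exact: Hphi.1.
Qed.

Lemma bnorm0 (V : BSObj R) : @bnorm R V 0 = 0%E.
Proof.
apply/eqP; rewrite eq_le bnorm_ge0 andbT.
by apply: ge_ereal_sup => _ [psi _ <-]; rewrite pairing0r.
Qed.

Lemma bnormD (V : BSObj R) x y : (@bnorm R V (x + y) <= bnorm x + bnorm y)%E.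
Proof.
apply: ge_ereal_sup => _ [psi Hpsi <-]; rewrite pairingDr EFinD.
by apply: leeD; apply: ereal_sup_ubound; exists psi.
Qed.

Lemma bnorm_mor (V W : BSObj R) (A : 'M[R]_(bsdim V, bsdim W)) x :
  BSmor A -> (@bnorm R W (x *m A) <= @bnorm R V x)%E.
Proof.
move=> HA; apply: ge_ereal_sup => _ [psi Hpsi <-]; rewrite pairing_mul.
by apply: ereal_sup_ubound; exists (psi *m A^T) => //; exact: dual_int_mor.
Qed.

Lemma le_add_inf (x a : \bar R) (S : set \bar R) : (0 <= a)%E ->
  (forall s, S s -> 0 <= s)%E -> (forall s, S s -> x <= a + s)%E ->
  (x <= a + ereal_inf S)%E.
Proof.
move=> a0 S0 H.
have i0 : (0 <= ereal_inf S)%E by apply: le_ereal_inf_tmp => s Ss; exact: S0.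
case: a a0 H => [r| |] // a0 H.
- rewrite -leeBlDl //; apply: le_ereal_inf_tmp => s Ss; rewrite leeBlDl //; exact: H.
- by rewrite addye ?leey // gt_eqF // (lt_le_trans _ i0) // ltNy0.
Qed.

End Norm.

Section Delta.
Variables (R : realType)
  (Fmor : forall V W : BSObj R, 'M[R]_(bsdim V, bsdim W) -> Prop).

Lemma deltaF_ge0 (V1 V2 : BSObj R) (b1 : 'rV[R]_(bsdim V1)) (b2 : 'rV[R]_(bsdim V2)) :
  (0 <= deltaF Fmor b1 b2)%E.
Proof. by apply: le_ereal_inf_tmp => _ [A _ <-]; exact: bnorm_ge0. Qed.

Lemma deltaF_le (V1 V2 : BSObj R) (b1 : 'rV[R]_(bsdim V1)) (b2 : 'rV[R]_(bsdim V2)) A :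
  Fmor V1 V2 A -> (deltaF Fmor b1 b2 <= bnorm (b1 *m A - b2))%E.
Proof. by move=> HA; apply: ereal_inf_lbound; exists A. Qed.

Lemma deltaF_tri (Fob : BSObj R -> Prop) : is_subcat Fob Fmor ->
  forall (V1 V2 V3 : BSObj R) (b1 : 'rV[R]_(bsdim V1)) (b2 : 'rV[R]_(bsdim V2))
    (b3 : 'rV[R]_(bsdim V3)),
  (deltaF Fmor b1 b3 <= deltaF Fmor b1 b2 + deltaF Fmor b2 b3)%E.
Proof.
move=> [Hmor _ Hcomp] V1 V2 V3 b1 b2 b3.
rewrite addeC; apply: le_add_inf; first exact: deltaF_ge0.
  by move=> _ [A _ <-]; exact: bnorm_ge0.
move=> _ [A HA <-]; rewrite addeC; apply: le_add_inf; first exact: bnorm_ge0.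
  by move=> _ [B _ <-]; exact: bnorm_ge0.
move=> _ [B HB <-].
apply: (le_trans (deltaF_le _ _ b1 b3 _ (Hcomp _ _ _ _ _ HA HB))).
have -> : b1 *m (A *m B) - b3 = (b1 *m A - b2) *m B + (b2 *m B - b3).
  by rewrite mulmxA mulmxBl addrA subrK.
apply: (le_trans (bnormD _ _ _ _)); apply: leeD => //.
by apply: bnorm_mor; have [] := Hmor _ _ _ HB.
Qed.

End Delta.

Theorem proposition2 (R : realType) (Fob : BSObj R -> Prop)
    (Fmor : forall V W : BSObj R, 'M[R]_(bsdim V, bsdim W) -> Prop) :
  is_subcat Fob Fmor -> convex_homs Fob Fmor ->
  [/\ (forall (V1 V2 : BSObj R) (b1 : 'rV[R]_(bsdim V1)) (b2 : 'rV[R]_(bsdim V2)),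
         Fob V1 -> Fob V2 -> base V1 b1 -> base V2 b2 ->
         (0 <= DeltaF Fmor b1 b2)%E),
      (forall (V : BSObj R) (b : 'rV[R]_(bsdim V)),
         Fob V -> base V b -> DeltaF Fmor b b = 0%E),
      (forall (V1 V2 : BSObj R) (b1 : 'rV[R]_(bsdim V1)) (b2 : 'rV[R]_(bsdim V2)),
         Fob V1 -> Fob V2 -> base V1 b1 -> base V2 b2 ->
         DeltaF Fmor b1 b2 = DeltaF Fmor b2 b1)
    & (forall (V1 V2 V3 : BSObj R) (b1 : 'rV[R]_(bsdim V1)) (b2 : 'rV[R]_(bsdim V2))
          (b3 : 'rV[R]_(bsdim V3)),
         Fob V1 -> Fob V2 -> Fob V3 -> base V1 b1 -> base V2 b2 -> base V3 b3 ->
         (DeltaF Fmor b1 b3 <= DeltaF Fmor b1 b2 + DeltaF Fmor b2 b3)%E)].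
Proof.
move=> Hsub _; split.
- by move=> V1 V2 b1 b2 _ _ _ _; rewrite /DeltaF le_max deltaF_ge0.
- move=> V b FV _; rewrite /DeltaF.
  have -> : deltaF Fmor b b = 0%E.
    apply/eqP; rewrite eq_le deltaF_ge0 andbT.
    have [_ Hid _] := Hsub.
    by apply: (le_trans (@deltaF_le R Fmor V V b b _ (Hid V FV))); rewrite mulmx1 subrr bnorm0.
  by rewrite maxxx.
- by move=> V1 V2 b1 b2 _ _ _ _; rewrite /DeltaF maxC.
- move=> V1 V2 V3 b1 b2 b3 _ _ _ _ _ _.
  rewrite /DeltaF ge_max; apply/andP; split.
    apply: (le_trans (@deltaF_tri R Fmor Fob Hsub _ _ _ b1 b2 b3)).
    by apply: leeD; rewrite le_max lexx ?orbT.
  apply: (le_trans (@deltaF_tri R Fmor Fob Hsub _ _ _ b3 b2 b1)).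
  by rewrite addeC; apply: leeD; rewrite le_max lexx ?orbT.
Qed.
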